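(* Let $(x_n)_{n\ge0}$ be an infinite path in $\Gamma$ with $\ell(x_n)=n$, let $z$ be nonreal, and let $v_z,u_z:\Gamma\to\mathbb C$ satisfy $v_z(x_0)=1$, $v_z(x_1)=(z-\beta_{x_0})/\lambda_{x_0}$, $u_z(x_0)=0$, $u_z(x_1)=1/\lambda_{x_0}$, and $(Jv_z)(x)=zv_z(x)$, $(Ju_z)(x)=zu_z(x)$ for all $x\in\Gamma\setminus\{x_0\}$. Then for every $n\ge1$ and every $x\in\Gamma_n$, $v_z(x_n)u_z(x)=u_z(x_n)v_z(x)$.
   Context: Let $\Gamma$ be an infinite connected tree whose vertices are arranged in levels $\ell(x)\in\{0,1,2,\dots\}$: every vertex $x$ is adjacent to exactly one vertex $x'$ with $\ell(x')=\ell(x)+1$; for $\ell(x)\ge 1$ the set $N_x=\{y:\ y'=x\}$ of neighbours of $x$ on level $\ell(x)-1$ is finite and nonempty; $N_x=\emptyset$ if $\ell(x)=0$; there are no other edges. Fix $\lambda_x>0$, $\beta_x\in\mathbb R$. The Jacobi matrix $J$ acts on functions $v:\Gamma\to\mathbb C$ by $(Jv)(x)=\lambda_x v(x')+\beta_x v(x)+\sum_{y\in N_x}\lambda_y v(y)$. Given the path $(x_n)$, $\Gamma_n$ denotes the connected component containing $x_n$ of the graph obtained from $\Gamma$ by deleting all edges $\{x_n,x_{n+1}\}$, $n\ge0$ (no vertices are deleted); $\Gamma_n$ is finite and $x_n$ is its only vertex on level $n$. *)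

(* Defs.v *)
(* The scalar field is an arbitrary numClosedFieldType C
   (e.g. the complex numbers); the tree is given by a vertex type V, a level
   function, a parent map  x |-> x'  and, for each x, a duplicate-free list
   enumerating the finite set N_x = {y | y' = x}. *)
From Stdlib Require Import List Relations.
From HB Require Import structures.
From mathcomp Require Import all_boot all_order all_algebra.
Set Implicit Arguments. Unset Strict Implicit. Unset Printing Implicit Defensive.
Import Order.TTheory GRing.Theory Num.Theory.
Local Open Scope ring_scope.

Definition adj (V : Type) (par : V -> V) (a b : V) : Prop := par a = b \/ par b = a.

Definition Jac (C : numClosedFieldType) (V : Type) (par : V -> V)
  (children : V -> seq V) (lam beta : V -> C) (w : V -> C) (x : V) : C :=
  lam x * w (par x) + beta x * w x + \sum_(y <- children x) lam y * w y.

Definition cut_edge (V : Type) (par : V -> V) (xs : nat -> V) (a b : V) : Prop :=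
  adj par a b /\
  ~ (exists k : nat, (a = xs k /\ b = xs k.+1) \/ (a = xs k.+1 /\ b = xs k)).

Definition in_Gamma_n (V : Type) (par : V -> V) (xs : nat -> V) (n : nat) (x : V)
  : Prop := clos_refl_trans V (cut_edge par xs) (xs n) x.

(* Main.v *)
Require Import Defs.
From Stdlib Require Import List Relations Classical.
From HB Require Import structures.
From mathcomp Require Import all_boot all_order all_algebra.
From mathcomp Require Import ring zify.
Import Order.TTheory GRing.Theory Num.Theory.
Local Open Scope ring_scope.

Fixpoint En (C : numClosedFieldType) (V : Type) (children : V -> seq V)
  (w : V -> C) (k : nat) (y : V) : C :=
  match k with
  | 0%N => w y * (w y)^*
  | k'.+1 => w y * (w y)^* + \sum_(c <- children y) @En C V children w k' c
  end.
Arguments En {C V}.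

Lemma En_ge0 (C : numClosedFieldType) (V : Type) (children : V -> seq V)
  (w : V -> C) k y : 0 <= En children w k y.
Proof.
elim: k y => [|k IH] y /=; first exact: mul_conjC_ge0.
apply: addr_ge0; first exact: mul_conjC_ge0.
by apply: sumr_ge0 => c _.
Qed.

Lemma le_in_sum (C : numClosedFieldType) (V : Type) (s : seq V) (f : V -> C) c :
  (forall x, 0 <= f x) -> In c s -> f c <= \sum_(x <- s) f x.
Proof.
move=> H0; elim: s => [|a s IH] //= [->|Hin]; rewrite big_cons.
  by rewrite lerDl; apply: sumr_ge0.
apply: le_trans (IH Hin) _; by rewrite lerDr.
Qed.

Lemma lev_iter (V : Type) (lev : V -> nat) (par : V -> V)
  (Hlev : forall x, lev (par x) = (lev x).+1) m d :
  lev (iter m par d) = (lev d + m)%N.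
Proof. elim: m => [|m IH] /=; [by rewrite addn0 | by rewrite Hlev IH addnS]. Qed.

Lemma realJ (C : numClosedFieldType) (a b : C) : a^* * b + a * b^* \is Num.real.
Proof. by rewrite CrealE rmorphD !rmorphM /= !conjCK addrC. Qed.

Lemma realJ1 (C : numClosedFieldType) (a : C) : a * a^* \is Num.real.
Proof. by rewrite CrealE rmorphM /= conjCK mulrC. Qed.

Lemma En_bound (C : numClosedFieldType) (V : Type)
  (lev : V -> nat) (par : V -> V) (children : V -> seq V)
  (Hlev : forall x, lev (par x) = (lev x).+1)
  (Hch : forall x y, In y (children x) <-> par y = x) (w : V -> C) :
  forall k y d m, (lev y <= k)%N -> iter m par d = y ->
    w d * (w d)^* <= En children w k y.
Proof.
elim=> [|k IH] y d [|m] Hl Hi /=.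
- by move: Hi => /= <-.
- move: Hl; rewrite -Hi /= Hlev; lia.
- move: Hi => /= <-; rewrite lerDl; apply: sumr_ge0 => c _; exact: En_ge0.
- apply: le_trans (IH (iter m par d) d m _ erefl) _.
    move: Hl; rewrite -Hi /= Hlev; lia.
  rewrite -[En children w k (iter m par d)]add0r; apply: lerD.
    exact: mul_conjC_ge0.
  apply: (@le_in_sum C V _ (En children w k)); first by move=> x; exact: En_ge0.
  by apply/Hch.
Qed.

Lemma real_sum_in (C : numClosedFieldType) (V : Type) (s : seq V) (f : V -> C) :
  (forall x, In x s -> f x \is Num.real) -> \sum_(x <- s) f x \is Num.real.
Proof.
elim: s => [|a s IH] H; first by rewrite big_nil rpred0.
rewrite big_cons rpredD //; first by apply: H; left.
by apply: IH => x Hx; apply: H; right.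
Qed.

Lemma En_real (C : numClosedFieldType) (V : Type)
  (lev : V -> nat) (par : V -> V) (children : V -> seq V) (lam beta : V -> C)
  (Hlev : forall x, lev (par x) = (lev x).+1)
  (Hch : forall x y, In y (children x) <-> par y = x)
  (Hlam : forall x, 0 < lam x)
  (Hbeta : forall x, beta x \is Num.real) (x0 : V) (z : C) (w : V -> C)
  (Hw : forall d, d <> x0 -> Jac par children lam beta w d = z * w d) :
  forall k y, (lev y <= k)%N -> (forall d m, iter m par d = y -> d <> x0) ->
   z * En children w k y - lam y * (w y)^* * w (par y) \is Num.real.
Proof.
elim=> [|k IH] y Hl Hc /=.
- have Hj := Hw y (Hc y 0%N erefl); rewrite /Jac in Hj.
  have E0 : children y = [::].
    case E: (children y) => [|c s] //.
    have : In c (children y) by rewrite E; left.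
    move/Hch => Hp; move: Hl; rewrite -Hp Hlev; lia.
  rewrite E0 big_nil addr0 in Hj.
  have -> : z * (w y * (w y)^*) - lam y * (w y)^* * w (par y)
            = beta y * (w y * (w y)^*).
    by rewrite mulrA -Hj; ring.
  by rewrite rpredM // realJ1.
- have Hj := Hw y (Hc y 0%N erefl); rewrite /Jac in Hj.
  set S := \sum_(c <- children y) lam c * w c in Hj.
  have e1 : \sum_(c <- children y) ((z * En children w k c - lam c * (w c)^* * w y)
              + lam c * ((w c)^* * w y + w c * (w y)^*))
            = z * \sum_(c <- children y) En children w k c + S * (w y)^*.
    by rewrite /S mulr_sumr mulr_suml -big_split /=; apply: eq_bigr => c _; ring.
  have eS : S = z * w y - lam y * w (par y) - beta y * w y by rewrite -Hj; ring.
  have -> : z * (w y * (w y)^* + \sum_(c <- children y) En children w k c)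
              - lam y * (w y)^* * w (par y)
            = beta y * (w y * (w y)^*) +
              \sum_(c <- children y) ((z * En children w k c - lam c * (w c)^* * w y)
              + lam c * ((w c)^* * w y + w c * (w y)^*)).
    by rewrite e1 eS; ring.
  rewrite rpredD //; first by rewrite rpredM // realJ1.
  apply: real_sum_in => c /Hch Hp.
  rewrite rpredD //; last by rewrite rpredM ?realJ ?gtr0_real.
  rewrite -Hp; apply: IH.
    by move: Hl; rewrite -Hp Hlev.
  by move=> d m Hd; apply: (Hc d m.+1); rewrite /= Hd.
Qed.

Lemma energy_zero (C : numClosedFieldType) (V : Type)
  (lev : V -> nat) (par : V -> V) (children : V -> seq V) (lam beta : V -> C)
  (Hlev : forall x, lev (par x) = (lev x).+1)
  (Hch : forall x y, In y (children x) <-> par y = x)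
  (Hlam : forall x, 0 < lam x)
  (Hbeta : forall x, beta x \is Num.real) (x0 : V) (z : C) (Hz : z \isn't Num.real)
  (w : V -> C)
  (Hw : forall d, d <> x0 -> Jac par children lam beta w d = z * w d) (y : V)
  (Hc : forall d m, iter m par d = y -> d <> x0) (Hpy : w (par y) = 0) :
  forall d m, iter m par d = y -> w d = 0.
Proof.
move=> d m Hd.
have Hr := @En_real _ _ _ _ _ _ _ Hlev Hch Hlam Hbeta _ _ _ Hw _ _ (leqnn (lev y)) Hc.
rewrite Hpy mulr0 subr0 in Hr.
have HE : En children w (lev y) y = 0.
  apply/eqP; apply: contraNT Hz => HE0.
  by rewrite -(mulfK HE0 z) rpredM // rpredV ger0_real // En_ge0.
have Hb := @En_bound _ _ _ _ _ Hlev Hch w _ _ _ _ (leqnn (lev y)) Hd.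
rewrite HE in Hb.
have : w d * (w d)^* == 0 by rewrite eq_le Hb mul_conjC_ge0.
by rewrite mul_conjC_eq0 => /eqP.
Qed.

Theorem lemma7 (C : numClosedFieldType) (V : Type)
  (lev : V -> nat) (par : V -> V) (children : V -> seq V) (lam beta : V -> C)
  (* tree structure *)
  (Hlev : forall x, lev (par x) = (lev x).+1)
  (Hch_nodup : forall x, NoDup (children x))
  (Hch : forall x y, In y (children x) <-> par y = x)
  (Hch_ne : forall x, (1 <= lev x)%N -> exists y, par y = x)
  (Hconn : forall x y : V, clos_refl_trans V (adj par) x y)
  (* Jacobi coefficients *)
  (Hlam : forall x, 0 < lam x)
  (Hbeta : forall x, beta x \is Num.real)
  (* the path *)
  (xs : nat -> V)
  (Hxs_lev : forall n, lev (xs n) = n)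
  (Hxs_adj : forall n, adj par (xs n) (xs n.+1))
  (* spectral parameter and solutions *)
  (z : C) (Hz : z \isn't Num.real)
  (v u : V -> C)
  (Hv0 : v (xs 0%N) = 1)
  (Hv1 : v (xs 1%N) = (z - beta (xs 0%N)) / lam (xs 0%N))
  (Hu0 : u (xs 0%N) = 0)
  (Hu1 : u (xs 1%N) = 1 / lam (xs 0%N))
  (Hv : forall x, x <> xs 0%N -> Jac par children lam beta v x = z * v x)
  (Hu : forall x, x <> xs 0%N -> Jac par children lam beta u x = z * u x) :
  forall n : nat, (1 <= n)%N -> forall x : V, in_Gamma_n par xs n x ->
    v (xs n) * u x = u (xs n) * v x.
Proof.
move=> n Hn x Hx.
have Hpx : forall k, par (xs k) = xs k.+1.
  move=> k; case: (Hxs_adj k) => // H.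
  have := f_equal lev H; rewrite Hlev !Hxs_lev; lia.
have Hix : forall m, iter m par (xs 0%N) = xs m.
  by elim=> //= m ->; apply: Hpx.
have HP : x = xs n \/ exists y m, par y = xs n /\ y <> xs n.-1 /\ iter m par x = y.
  have Hx' := clos_rt_rtn1 _ _ _ _ Hx; clear Hx.
  elim: Hx' => [|a b Hab _ IH]; first by left.
  case: Hab => Hadj Hcut.
  case: IH => [Ha|[y [m [Hy [Hyn Hm]]]]].
  - subst a. case: Hadj => Hb.
    + exfalso; apply: Hcut; exists n; left; split=> //; by rewrite -Hb Hpx.
    + destruct (classic (b = xs n.-1)) as [E|E].
      * exfalso; apply: Hcut; exists n.-1; right; rewrite prednK //.
      * right; by exists b, 0%N.
  - case: Hadj => Hb.
    + case: m Hm => [|m] Hm.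
      * left; rewrite -Hb; simpl in Hm; by rewrite Hm.
      * right; exists y, m; split=> //; split=> //; by rewrite -Hb -iterSr.
    + right; exists y, m.+1; split=> //; split=> //; by rewrite iterSr Hb.
case: HP => [->|[y [m [Hy [Hyn Hm]]]]]; first by rewrite mulrC.
pose w := fun t => v (xs n) * u t - u (xs n) * v t.
have Hw : forall d, d <> xs 0%N -> Jac par children lam beta w d = z * w d.
  move=> d Hd; have := Hu d Hd; have := Hv d Hd; rewrite /Jac /w => Ev Eu.
  have -> : \sum_(c <- children d) lam c * (v (xs n) * u c - u (xs n) * v c)
     = v (xs n) * \sum_(c <- children d) lam c * u c
       - u (xs n) * \sum_(c <- children d) lam c * v c.
    by rewrite !mulr_sumr -sumrB; apply: eq_bigr => c _; ring.
  set Su := \sum_(c <- children d) lam c * u c in Eu *.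
  set Sv := \sum_(c <- children d) lam c * v c in Ev *.
  have eU : Su = z * u d - lam d * u (par d) - beta d * u d by rewrite -Eu; ring.
  have eV : Sv = z * v d - lam d * v (par d) - beta d * v d by rewrite -Ev; ring.
  rewrite eU eV; ring.
have Hc : forall d k, iter k par d = y -> d <> xs 0%N.
  move=> d k Hd Hd0; subst d; rewrite Hix in Hd.
  have H1 := f_equal lev Hy; rewrite Hlev -Hd !Hxs_lev in H1.
  by apply: Hyn; rewrite -Hd -H1.
have Hpy : w (par y) = 0 by rewrite /w Hy mulrC subrr.
have := @energy_zero _ _ _ _ _ _ _ Hlev Hch Hlam Hbeta _ _ Hz _ Hw _ Hc Hpy _ _ Hm.
by rewrite /w => /eqP; rewrite subr_eq0 => /eqP.
Qed.
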